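(* For any nontrivial connected graph $G$, $\gamma_t(G)\le \gamma_{qtR}(G)\le 2\gamma_t(G)$. Furthermore: (i) $\gamma_{qtR}(G)=\gamma_t(G)$ if and only if $G\cong P_2$; (ii) $\gamma_{qtR}(G)=\gamma_t(G)+1$ if and only if $\gamma_{qtR}(G)=3$; (iii) $\gamma_{qtR}(G)=2\gamma_t(G)$ if and only if $\gamma_{qtR}(G)=\gamma_{tR}(G)$ and $\gamma_{tR}(G)=2\gamma_t(G)$.
   Context: All graphs are finite, simple and undirected. $\gamma_t(G)$ is the total domination number: the minimum size of a set $S\subseteq V(G)$ such that every vertex of $G$ has a neighbor in $S$. For a function $f:V(G)\to\{0,1,2\}$ write $V_i=\{v: f(v)=i\}$; its weight is $|V_1|+2|V_2|$. A total Roman dominating function (TRDF) is an $f$ in which every vertex labeled $0$ has a neighbor labeled $2$ and the subgraph induced by $V_1\cup V_2$ has no isolated vertices; $\gamma_{tR}(G)$ is the minimum weight of a TRDF. A quasi-total Roman dominating function (QTRDF) is an $f$ such that every vertex labeled $0$ is adjacent to a vertex labeled $2$, and every vertex that is isolated in the subgraph induced by $V_1\cup V_2$ has label $1$; $\gamma_{qtR}(G)$ is the minimum weight of a QTRDF. *)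

(* Defs.v *)
From mathcomp Require Import all_boot.
Set Implicit Arguments. Unset Strict Implicit. Unset Printing Implicit Defensive.

Definition simple_graph (T : finType) (e : rel T) : Prop :=
  symmetric e /\ irreflexive e.

Definition nontrivial (T : finType) : Prop := 1 < #|T|.

Definition connected_graph (T : finType) (e : rel T) : Prop :=
  forall x y : T, connect e x y.

Definition graph_iso (T T' : finType) (e : rel T) (e' : rel T') : Prop :=
  exists f : T -> T', bijective f /\ forall x y, e' (f x) (f y) = e x y.

Definition path_rel (n : nat) : rel 'I_n :=
  fun i j => (i.+1 == j :> nat) || (j.+1 == i :> nat).

Arguments path_rel n : clear implicits.

Definition total_dominating (T : finType) (e : rel T) (S : {set T}) : bool :=
  [forall v, [exists u in S, e v u]].

(* gamma_t: minimum size of a total dominating set (the default #|T| is an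
   upper bound, attained by V(G) when G has no isolated vertex). *)
Definition gamma_t (T : finType) (e : rel T) : nat :=
  \big[minn/#|T|]_(S : {set T} | total_dominating e S) #|S|.

Definition labeling (T : finType) := {ffun T -> 'I_3}.

Definition weight (T : finType) (f : labeling T) : nat := \sum_(v : T) (f v : nat).

Definition roman_cond (T : finType) (e : rel T) (f : labeling T) : bool :=
  [forall v, ((f v : nat) == 0) ==> [exists u, e v u && ((f u : nat) == 2)]].

Definition isolated_in_pos (T : finType) (e : rel T) (f : labeling T) (v : T) : bool :=
  ((f v : nat) != 0) && ~~ [exists u, e v u && ((f u : nat) != 0)].

Definition is_TRDF (T : finType) (e : rel T) (f : labeling T) : bool :=
  roman_cond e f && [forall v, ~~ isolated_in_pos e f v].

Definition is_QTRDF (T : finType) (e : rel T) (f : labeling T) : bool :=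
  roman_cond e f && [forall v, isolated_in_pos e f v ==> ((f v : nat) == 1)].

(* Minimum weights; the default 2*#|T| is an upper bound (constant 2 labeling). *)
Definition gamma_tR (T : finType) (e : rel T) : nat :=
  \big[minn/(2 * #|T|)]_(f : labeling T | is_TRDF e f) weight f.

Definition gamma_qtR (T : finType) (e : rel T) : nat :=
  \big[minn/(2 * #|T|)]_(f : labeling T | is_QTRDF e f) weight f.

(* Main.v *)
Require Import Defs.
From mathcomp Require Import all_boot zify.
Set Implicit Arguments. Unset Strict Implicit. Unset Printing Implicit Defensive.

Lemma bm_le (I : finType) (P : pred I) (F : I -> nat) d i :
  P i -> \big[minn/d]_(j | P j) F j <= F i.
Proof.
move=> Pi; have : i \in index_enum I by rewrite mem_index_enum.
elim: (index_enum I) => [|x r IH] //; rewrite big_cons inE.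
case/orP=> [/eqP <-|ir]; first by rewrite Pi geq_minl.
case: (P x); last exact: IH.
by rewrite geq_min IH ?orbT.
Qed.

Lemma bm_ge (I : finType) (P : pred I) (F : I -> nat) d k :
  k <= d -> (forall i, P i -> k <= F i) -> k <= \big[minn/d]_(j | P j) F j.
Proof.
move=> kd H; apply: (big_ind (fun x => k <= x)) => //.
by move=> x y kx ky; rewrite leq_min kx ky.
Qed.

Lemma bm_att (I : finType) (P : pred I) (F : I -> nat) d i0 :
  P i0 -> F i0 <= d -> exists i, P i /\ \big[minn/d]_(j | P j) F j = F i.
Proof.
move=> P0 F0.
have H : forall r : seq I, \big[minn/d]_(j <- r | P j) F j = d \/
           exists i, P i /\ \big[minn/d]_(j <- r | P j) F j = F i.
  elim=> [|x r IH]; first by left; rewrite big_nil.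
  rewrite big_cons; case Px: (P x) => //=.
  case: (leqP (F x) (\big[minn/d]_(j <- r | P j) F j)) => h.
    by right; exists x.
  by [].  
case: (H (index_enum I)) => // hd; exists i0; split => //.
apply/eqP; rewrite eqn_leq bm_le //=.
by rewrite [X in _ <= X]hd.
Qed.

Lemma other_vertex (T : finType) (x : T) : nontrivial T -> exists y, y != x.
Proof.
rewrite /nontrivial => /card_gt1P [a [b [_ _ ab]]].
case: (eqVneq a x) => [ax|]; last by exists a.
by exists b; rewrite -ax eq_sym.
Qed.

Lemma edge_out (T : finType) (e : rel T) (A : {set T}) x y :
  connected_graph e -> x \in A -> y \notin A ->
  exists a b, [/\ a \in A, b \notin A & e a b].
Proof.
move=> conn xA yA; case/connectP: (conn x y) => p.
elim: p x xA => [|z p IH] x xA /=; first by move=> _ ey; rewrite ey /= xA in yA.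
case/andP=> exz pz ly; case: (boolP (z \in A)) => zA.
  exact: IH pz ly.
by exists x, z.
Qed.

Lemma nb_ex (T : finType) (e : rel T) x :
  nontrivial T -> connected_graph e -> exists y, e x y.
Proof.
move=> nt conn; case: (other_vertex x nt) => y yx.
have [||a [b [aA bA eab]]] := @edge_out T e [set x] x y conn; rewrite ?inE ?eqxx //.
by move: aA; rewrite inE => /eqP <-; exists b.
Qed.

Lemma tds_ge2 (T : finType) (e : rel T) (S : {set T}) (x : T) :
  simple_graph e -> total_dominating e S -> 2 <= #|S|.
Proof.
move=> [sym irr] /forallP H.
case/existsP: (H x) => u /andP [uS _].
case/existsP: (H u) => w /andP [wS euw].
have uw : u != w by apply/eqP => uw; rewrite uw irr in euw.
have : [set u; w] \subset S by apply/subsetP => z; rewrite !inE => /orP [] /eqP ->.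
by move/subset_leq_card; rewrite cards2 uw.
Qed.

Lemma tds_setT (T : finType) (e : rel T) :
  nontrivial T -> connected_graph e -> total_dominating e [set: T].
Proof.
move=> nt conn; apply/forallP => x; case: (nb_ex x nt conn) => y exy.
by apply/existsP; exists y; rewrite inE exy.
Qed.

Lemma gt_le (T : finType) (e : rel T) S : total_dominating e S -> gamma_t e <= #|S|.
Proof. by move=> H; rewrite /gamma_t; apply: (@bm_le _ (fun S => total_dominating e S) (fun S : {set T} => #|S|)). Qed.

Lemma gt_att (T : finType) (e : rel T) :
  nontrivial T -> connected_graph e ->
  exists S, total_dominating e S /\ gamma_t e = #|S|.
Proof.
move=> nt conn; apply: (@bm_att _ (fun S => total_dominating e S) (fun S : {set T} => #|S|) _ [set: T]); first exact: tds_setT.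
by rewrite cardsT.
Qed.

Lemma gt_ge2 (T : finType) (e : rel T) :
  simple_graph e -> nontrivial T -> connected_graph e -> 2 <= gamma_t e.
Proof.
move=> sg nt conn; case: (gt_att nt conn) => S [tS ->].
move: (nt); rewrite /nontrivial => /card_gt1P [x _].
exact: tds_ge2 x sg tS.
Qed.

Definition l0 : 'I_3 := @Ordinal 3 0 isT.
Definition l1 : 'I_3 := @Ordinal 3 1 isT.
Definition l2 : 'I_3 := @Ordinal 3 2 isT.

Definition Sf (T : finType) (f : labeling T) := [set x | (f x : nat) != 0].
Definition V2f (T : finType) (f : labeling T) := [set x | (f x : nat) == 2].

Lemma sum_bool (T : finType) (b : pred T) : \sum_v (b v : nat) = #|[set v | b v]|.
Proof.
rewrite -sum1_card [RHS]big_mkcond /=; apply: eq_bigr => v _; rewrite inE.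
by case: (b v). Qed.

Lemma weight_split (T : finType) (f : labeling T) : weight f = #|Sf f| + #|V2f f|.
Proof.
rewrite /weight /Sf /V2f -!sum_bool -big_split /=; apply: eq_bigr => v _.
by case: (f v) => [[|[|[|]]] ].
Qed.

Lemma qtrdf_intro (T : finType) (e : rel T) (g : labeling T) :
  (forall z, (g z : nat) = 0 -> exists u, e z u /\ (g u : nat) = 2) ->
  (forall z, (g z : nat) = 2 -> exists u, e z u /\ (g u : nat) != 0) ->
  is_QTRDF e g.
Proof.
move=> H0 H2; apply/andP; split.
  apply/forallP => z; apply/implyP => /eqP /H0 [u [ezu gu]].
  by apply/existsP; exists u; rewrite ezu gu.
apply/forallP => z; apply/implyP => /andP [gz0 /existsPn niso].
have : (g z : nat) < 3 by [].
case Hg: (g z : nat) gz0 => [|[|[|]]] //= _ _.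
case: (H2 z Hg) => u [ezu gu].
by move: (niso u); rewrite ezu gu.
Qed.

Lemma qtrdf_elim0 (T : finType) (e : rel T) (g : labeling T) :
  is_QTRDF e g -> forall z, (g z : nat) = 0 -> exists u, e z u /\ (g u : nat) = 2.
Proof.
case/andP => /forallP H _ z gz; move/implyP: (H z); rewrite gz eqxx => /(_ isT).
by case/existsP => u /andP [ezu /eqP gu]; exists u.
Qed.

Lemma qtrdf_elim2 (T : finType) (e : rel T) (g : labeling T) :
  is_QTRDF e g -> forall z, (g z : nat) = 2 -> exists u, e z u /\ (g u : nat) != 0.
Proof.
case/andP => _ /forallP H z gz; move/implyP: (H z); rewrite gz /= /isolated_in_pos gz /=.
case: existsP => //= [[u /andP [ezu gu]] _|_ /(_ isT) //]; by exists u.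
Qed.

Lemma trdf_intro (T : finType) (e : rel T) (g : labeling T) :
  (forall z, (g z : nat) = 0 -> exists u, e z u /\ (g u : nat) = 2) ->
  (forall z, (g z : nat) != 0 -> exists u, e z u /\ (g u : nat) != 0) ->
  is_TRDF e g.
Proof.
move=> H0 H2; apply/andP; split.
  apply/forallP => z; apply/implyP => /eqP /H0 [u [ezu gu]].
  by apply/existsP; exists u; rewrite ezu gu.
apply/forallP => z; apply/negP => /andP [/H2 [u [ezu gu]] /existsPn niso].
by move: (niso u); rewrite ezu gu.
Qed.

Lemma trdf_qtrdf (T : finType) (e : rel T) (g : labeling T) : is_TRDF e g -> is_QTRDF e g.
Proof.
case/andP => H1 /forallP H2; rewrite /is_QTRDF H1; apply/forallP => z.
by rewrite (negbTE (H2 z)).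
Qed.

Definition labS (T : finType) (S : {set T}) (a b : 'I_3) : labeling T :=
  [ffun x => if x \in S then a else b].

Lemma qtR_le (T : finType) (e : rel T) f : is_QTRDF e f -> gamma_qtR e <= weight f.
Proof. by move=> H; apply: (@bm_le _ (fun f => is_QTRDF e f) (@weight T)). Qed.

Lemma tR_le (T : finType) (e : rel T) f : is_TRDF e f -> gamma_tR e <= weight f.
Proof. by move=> H; apply: (@bm_le _ (fun f => is_TRDF e f) (@weight T)). Qed.

Lemma const2_trdf (T : finType) (e : rel T) :
  nontrivial T -> connected_graph e ->
  is_TRDF e (labS [set: T] l2 l0) /\ weight (labS [set: T] l2 l0) = 2 * #|T|.
Proof.
move=> nt conn; split.
  apply: trdf_intro => z; rewrite ffunE inE //= => _;
  case: (nb_ex z nt conn) => u ezu; exists u; by rewrite ffunE inE.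
rewrite weight_split; have -> : Sf (labS [set: T] l2 l0) = [set: T].
  by apply/setP => z; rewrite !inE ffunE inE.
have -> : V2f (labS [set: T] l2 l0) = [set: T].
  by apply/setP => z; rewrite !inE ffunE inE.
by rewrite cardsT addnn -mul2n.
Qed.

Lemma qtR_att (T : finType) (e : rel T) :
  nontrivial T -> connected_graph e ->
  exists f, is_QTRDF e f /\ gamma_qtR e = weight f.
Proof.
move=> nt conn; case: (const2_trdf (e:=e) nt conn) => H1 H2.
apply: (@bm_att _ (fun f => is_QTRDF e f) (@weight T) _ (labS [set: T] l2 l0)).
  exact: trdf_qtrdf. by rewrite H2.
Qed.

Lemma tR_att (T : finType) (e : rel T) :
  nontrivial T -> connected_graph e ->
  exists f, is_TRDF e f /\ gamma_tR e = weight f.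
Proof.
move=> nt conn; case: (const2_trdf (e:=e) nt conn) => H1 H2.
apply: (@bm_att _ (fun f => is_TRDF e f) (@weight T) _ (labS [set: T] l2 l0)) => //.
by rewrite H2.
Qed.

Lemma qtR_le_tR (T : finType) (e : rel T) :
  nontrivial T -> connected_graph e -> gamma_qtR e <= gamma_tR e.
Proof.
move=> nt conn; case: (tR_att (e:=e) nt conn) => f [Hf ->].
by apply: qtR_le; apply: trdf_qtrdf.
Qed.

Lemma tR_le_2gt (T : finType) (e : rel T) :
  nontrivial T -> connected_graph e -> gamma_tR e <= 2 * gamma_t e.
Proof.
move=> nt conn; case: (gt_att nt conn) => S [/forallP tS ->].
have -> : 2 * #|S| = weight (labS S l2 l0).
  rewrite weight_split; have -> : Sf (labS S l2 l0) = S.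
    by apply/setP => z; rewrite !inE ffunE; case: (z \in S).
  have -> : V2f (labS S l2 l0) = S.
    by apply/setP => z; rewrite !inE ffunE; case: (z \in S).
  by rewrite addnn -mul2n.
apply: tR_le; apply: trdf_intro => z; rewrite ffunE.
  move=> _; case/existsP: (tS z) => u /andP [uS ezu]; exists u.
  by rewrite ffunE uS.
case: ifP => // zS _; case/existsP: (tS z) => u /andP [uS ezu]; exists u.
by rewrite ffunE uS.
Qed.

Lemma qtR_le_card (T : finType) (e : rel T) : gamma_qtR e <= #|T|.
Proof.
have -> : #|T| = weight (labS [set: T] l1 l0).
  rewrite weight_split; have -> : Sf (labS [set: T] l1 l0) = [set: T].
    by apply/setP => z; rewrite !inE ffunE inE.
  have -> : V2f (labS [set: T] l1 l0) = set0.
    by apply/setP => z; rewrite !inE ffunE inE.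
  by rewrite cardsT cards0 addn0.
apply: qtR_le; apply: qtrdf_intro => z; by rewrite ffunE inE.
Qed.

Lemma nbf (T : finType) (e : rel T) :
  nontrivial T -> connected_graph e -> exists nb : T -> T, forall x, e x (nb x).
Proof.
move=> nt conn; exists (fun x => odflt x [pick y | e x y]) => x.
case: pickP => [y //|H]; case: (nb_ex x nt conn) => y exy.
by rewrite H in exy.
Qed.

Lemma key (T : finType) (e : rel T) f :
  simple_graph e -> nontrivial T -> connected_graph e ->
  is_QTRDF e f -> gamma_t e <= #|Sf f|.
Proof.
move=> [sym irr] nt conn Hf; case: (nbf nt conn) => nb Hnb.
pose I := [set x | isolated_in_pos e f x].
have IS : I \subset Sf f by apply/subsetP => x; rewrite !inE => /andP [].
have iso1 : forall u, isolated_in_pos e f u -> (f u : nat) = 1.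
  move=> u iu; case/andP: Hf => _ /forallP /(_ u) /implyP /(_ iu) /eqP //.
apply: (@leq_trans #|(Sf f :\: I) :|: (nb @: I)|).
  apply: gt_le; apply/forallP => z.
  case: (boolP (z \in I)) => zI.
    by apply/existsP; exists (nb z); rewrite Hnb andbT inE imset_f ?orbT.
  case: (eqVneq (f z : nat) 0) => fz.
    case: (qtrdf_elim0 Hf fz) => u [ezu fu]; apply/existsP; exists u.
    rewrite ezu andbT !inE fu /=; apply/orP; left.
    by rewrite andbT; apply/negP => /iso1; rewrite fu.
  move: zI; rewrite inE /isolated_in_pos fz /= negbK => /existsP [u /andP [ezu fu]].
  apply/existsP; exists u; rewrite ezu andbT !inE fu /= andbT.
  apply/orP; left; rewrite /isolated_in_pos negb_and; apply/orP; right; rewrite negbK.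
  by apply/existsP; exists z; rewrite sym ezu fz.
apply: leq_trans (leq_card_setU _ _) _.
rewrite -(cardsID I (Sf f)) addnC leq_add2r.
have -> : Sf f :&: I = I by apply/setIidPr.
exact: leq_imset_card.
Qed.

Lemma gt_le_qtR (T : finType) (e : rel T) :
  simple_graph e -> nontrivial T -> connected_graph e -> gamma_t e <= gamma_qtR e.
Proof.
move=> sg nt conn; case: (qtR_att (e:=e) nt conn) => f [Hf ->].
by apply: leq_trans (key sg nt conn Hf) _; rewrite weight_split leq_addr.
Qed.

Lemma out_small (T : finType) (A : {set T}) : #|A| < #|T| -> exists z, z \notin A.
Proof.
move=> H; case: (pickP [pred z | z \notin A]) => [z Hz|H0]; first by exists z.
have : A = [set: T] by apply/setP => z; move: (H0 z); rewrite /= inE; case: (z \in A).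
by move=> AT; rewrite AT cardsT ltnn in H.
Qed.

Lemma three_path (T : finType) (e : rel T) :
  simple_graph e -> connected_graph e -> 3 <= #|T| ->
  exists v w p, [/\ e v w, e v p & p != w].
Proof.
move=> [sym irr] conn n3.
have nt : nontrivial T by rewrite /nontrivial; apply: leq_trans n3.
move: (nt); rewrite /nontrivial => /card_gt1P [x _].
case: (nb_ex x nt conn) => y exy.
have [z zA] : exists z, z \notin [set x; y].
  by apply: out_small; apply: leq_trans n3; rewrite cards2 ltnS; case: (x != y).
have [||a [b [aA bA eab]]] := @edge_out T e [set x; y] x z conn; rewrite ?set21 //.
move: bA; rewrite !inE negb_or => /andP [bx by_].
case/set2P: aA => aE; rewrite aE in eab.
  by exists x, y, b.
by exists y, x, b; rewrite sym.
Qed.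

Lemma L3 (T : finType) (e : rel T) v w p :
  simple_graph e -> nontrivial T -> connected_graph e ->
  e v w -> e v p -> p != w -> gamma_t e <= #|T|.-1.
Proof.
move=> sg nt conn evw evp pw; case: (sg) => sym irr.
have vw : v != w by apply/eqP => E; rewrite E irr in evw.
have vp : v != p by apply/eqP => E; rewrite E irr in evp.
pose g : labeling T := [ffun z => if z == v then l2 else if z == p then l0 else l1].
have Hg : is_QTRDF e g.
  apply: qtrdf_intro => z; rewrite ffunE.
    case: (eqVneq z v) => // _; case: (eqVneq z p) => // -> _.
    by exists v; rewrite sym evp ffunE eqxx.
  case: (eqVneq z v) => [-> _|_]; last by case: (z == p).
  by exists w; rewrite evw ffunE (eq_sym w v) (negbTE vw) (eq_sym w p) (negbTE pw).
apply: leq_trans (key sg nt conn Hg) _.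
have -> : Sf g = [set~ p].
  apply/setP => z; rewrite !inE ffunE.
  case: (eqVneq z v) => [->|]; first by rewrite eq_sym vp.
  by case: (z == p).
by rewrite cardsC1.
Qed.

Lemma L4a (T : finType) (e : rel T) v a b c :
  simple_graph e -> nontrivial T -> connected_graph e ->
  e v a -> e v b -> e v c -> a != b -> c != a -> c != b -> gamma_t e + 2 <= #|T|.
Proof.
move=> sg nt conn eva evb evc ab ca cb; case: (sg) => sym irr.
have va : v != a by apply/eqP => E; rewrite E irr in eva.
have vb : v != b by apply/eqP => E; rewrite E irr in evb.
have vc : v != c by apply/eqP => E; rewrite E irr in evc.
pose g : labeling T := [ffun z => if z == v then l2 else if (z == a) || (z == b) then l0 else l1].
have Hg : is_QTRDF e g.
  apply: qtrdf_intro => z; rewrite ffunE.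
    case: (eqVneq z v) => // _; case: ifP => // /orP [] /eqP -> _.
      by exists v; rewrite sym eva ffunE eqxx.
    by exists v; rewrite sym evb ffunE eqxx.
  case: (eqVneq z v) => [-> _|_]; last by case: (_ || _).
  by exists c; rewrite evc ffunE (eq_sym c v) (negbTE vc) (negbTE ca) (negbTE cb).
apply: (@leq_trans (#|Sf g| + 2)); first by rewrite leq_add2r; exact: (key sg nt conn Hg).
have -> : Sf g = ~: [set a; b].
  apply/setP => z; rewrite !inE ffunE.
  case: (eqVneq z v) => [->|]; first by rewrite (negbTE va) (negbTE vb).
  by case: (_ || _).
by rewrite -(cardsC [set a; b]) cards2 ab addnC.
Qed.

Lemma L4b (T : finType) (e : rel T) a v w b :
  simple_graph e -> nontrivial T -> connected_graph e ->
  e a v -> e v w -> e w b -> a != w -> v != b -> a != b -> gamma_t e + 2 <= #|T|.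
Proof.
move=> sg nt conn eav evw ewb aw vb ab; case: (sg) => sym irr.
have av : a != v by apply/eqP => E; rewrite E irr in eav.
have wb : w != b by apply/eqP => E; rewrite E irr in ewb.
pose g : labeling T := [ffun z => if (z == v) || (z == w) then l2 else if (z == a) || (z == b) then l0 else l1].
have Hg : is_QTRDF e g.
  apply: qtrdf_intro => z; rewrite ffunE.
    case: ifP => // _; case: ifP => // /orP [] /eqP -> _.
      by exists v; rewrite eav ffunE eqxx.
    by exists w; rewrite sym ewb ffunE eqxx orbT.
  case: ifP => [/orP [] /eqP -> _|_]; last by case: (_ || _).
    by exists w; rewrite evw ffunE eqxx orbT.
  by exists v; rewrite sym evw ffunE eqxx.
apply: (@leq_trans (#|Sf g| + 2)); first by rewrite leq_add2r; exact: (key sg nt conn Hg).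
have -> : Sf g = ~: [set a; b].
  apply/setP => z; rewrite !inE ffunE.
  case: ifP => [/orP [] /eqP ->|_]; last by case: ((z == a) || (z == b)).
    by rewrite (eq_sym v a) (negbTE av) (negbTE vb).
  by rewrite (eq_sym w a) (negbTE aw) (negbTE wb).
by rewrite -(cardsC [set a; b]) cards2 ab addnC.
Qed.

Lemma n3_lem (T : finType) (e : rel T) :
  simple_graph e -> connected_graph e -> 3 <= #|T| -> gamma_t e <= #|T|.-1.
Proof.
move=> sg conn n3.
have nt : nontrivial T by rewrite /nontrivial; apply: leq_trans n3.
case: (three_path sg conn n3) => v [w [p [evw evp pw]]].
exact: (L3 sg nt conn evw evp pw).
Qed.

Lemma n4_lem (T : finType) (e : rel T) :
  simple_graph e -> connected_graph e -> 4 <= #|T| -> gamma_t e + 2 <= #|T|.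
Proof.
move=> sg conn n4; case: (sg) => sym irr.
have n3 : 3 <= #|T| by apply: ltnW.
have nt : nontrivial T by rewrite /nontrivial; apply: leq_trans n3.
case: (three_path sg conn n3) => v [w [p [evw evp pw]]].
have [z zX] : exists z, z \notin [set p; v; w].
  apply: out_small; apply: leq_trans n4; rewrite ltnS.
  apply: leq_trans (leq_card_setU _ _) _; rewrite cards1 cards2 addn1 ltnS.
  by case: (_ != _).
have [||a [b [aA bA eab]]] := @edge_out T e [set p; v; w] v z conn; [by rewrite !inE eqxx orbT | exact: zX |].
move: bA; rewrite !inE !negb_or => /andP [/andP [bp bv] bw].
move: aA; rewrite !inE => /orP [/orP [] | ] /eqP aE; rewrite aE in eab.
- have ebp : e b p by rewrite sym.
  have epv : e p v by rewrite sym.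
  exact: (L4b sg nt conn ebp epv evw bv pw bw).
- by apply: (L4a sg nt conn evw evp eab); rewrite // eq_sym.
- have epv : e p v by rewrite sym.
  by apply: (L4b sg nt conn epv evw eab pw); rewrite // eq_sym.
Qed.

Definition upd (T : finType) (f : labeling T) (x : T) (l : 'I_3) : labeling T :=
  [ffun z => if z == x then l else f z].

Lemma updE (T : finType) (f : labeling T) x l z : upd f x l z = if z == x then l else f z.
Proof. by rewrite ffunE. Qed.

Lemma i3 (k : 'I_3) : (k : nat) = 0 \/ (k : nat) = 1 \/ (k : nat) = 2.
Proof. by case: k => [[|[|[|]]] ] //; auto. Qed.



Lemma Sf_upd0 (T : finType) (f : labeling T) x :
  (f x : nat) != 0 -> #|Sf (upd f x l0)| = #|Sf f|.-1.
Proof.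
move=> fx; have -> : Sf (upd f x l0) = Sf f :\ x.
  by apply/setP => z; rewrite !inE updE; case: (z == x).
by rewrite (cardsD1 x (Sf f)) inE fx.
Qed.

Lemma n2_one (T : finType) (e : rel T) f :
  simple_graph e -> nontrivial T -> connected_graph e ->
  is_QTRDF e f -> #|V2f f| = 1 -> gamma_t e <= maxn (#|Sf f|.-1) 2.
Proof.
move=> sg nt conn Hf /eqP/cards1P [v Vv]; case: (sg) => sym irr.
have f2v : forall z, (f z : nat) = 2 -> z = v.
  by move=> z fz; apply/set1P; rewrite -Vv inE fz.
have : v \in V2f f by rewrite Vv set11.
rewrite inE => /eqP fv.
case: (qtrdf_elim2 Hf fv) => c [evc fc0].
have fc : (f c : nat) = 1.
  case: (i3 (f c)) => [h|[//|/f2v h]]; first by rewrite h in fc0.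
  by rewrite h irr in evc.
have vc : v != c by apply/eqP => E; rewrite -E fv in fc.
case: (leqP #|Sf f| 2) => [s2|s3].
  by apply: leq_trans (key sg nt conn Hf) _; rewrite leq_max s2 orbT.
apply: (@leq_trans #|Sf f|.-1); last by rewrite leq_maxl.
case: (boolP [exists x, [&& (f x : nat) == 1, x != c & e v x]]) => [/existsP [x /and3P [/eqP fx xc evx]]|noA].
  have vx : v != x by apply/eqP => E; rewrite -E fv in fx.
  rewrite -(@Sf_upd0 _ f x) ?fx //; apply: (key sg nt conn).
  apply: qtrdf_intro => z; rewrite updE.
    case: eqVneq => [-> _|zx fz].
      by exists v; rewrite sym evx updE (negbTE vx).
    case: (qtrdf_elim0 Hf fz) => u [ezu /f2v uv]; exists v.
    by split; [rewrite -uv | rewrite updE (negbTE vx)].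
  case: eqVneq => [-> //|zx /f2v zv]; exists c.
  rewrite updE zv evc; case: (eqVneq c x) => [cx|cx]; first by rewrite cx eqxx in xc.
  by rewrite fc.
case: (boolP (Sf f \subset [set c; v])) => [sub|/subsetPn [r rS rcv]].
  move/subset_leq_card: sub; rewrite cards2 => H.
  by have := leq_trans s3 H; case: (c != v).
move: rS rcv; rewrite !inE negb_or => fr0 /andP [rc rv].
have fr : (f r : nat) = 1.
  case: (i3 (f r)) => [h|[//|/f2v h]]; first by rewrite h in fr0.
  by rewrite h eqxx in rv.
pose R := [set z | ((f z : nat) == 1) && (z != c)].
have [||a [b [aR bR eab]]] := @edge_out T e R r v conn; [by rewrite inE fr eqxx rc | by rewrite inE fv |].
move: aR bR; rewrite !inE => /andP [/eqP fa ac] bR.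
have av : a != v by apply/eqP => E; rewrite E fv in fa.
have ca : (c == a) = false by rewrite eq_sym; apply/negbTE.
have va : (v == a) = false by rewrite eq_sym; apply/negbTE.
have vc' : (v == c) = false by apply/negbTE.
case: (i3 (f b)) => [fb|[fb|/f2v bv]]; last first.
- by move/existsP: noA; case; exists a; rewrite fa eqxx ac sym -bv eab.
-
  have bc : b = c by apply/eqP; move: bR; rewrite fb eqxx /= negbK.
  rewrite bc in eab.
  pose g := upd (upd f c l2) a l0.
  have -> : #|Sf f|.-1 = #|Sf g|.
    rewrite -(@Sf_upd0 _ f a) ?fa //; apply: eq_card => z.
    rewrite !inE !updE; case: (eqVneq z a) => // za; case: (eqVneq z c) => [->|//].
    by rewrite fc.
  apply: (key sg nt conn); apply: qtrdf_intro => z; rewrite !updE.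
    case: eqVneq => [-> _|za]; first by exists c; rewrite eab !updE ca eqxx.
    case: eqVneq => [//|zc fz].
    case: (qtrdf_elim0 Hf fz) => u [ezu /f2v uv]; exists v; rewrite -uv ezu uv.
    by rewrite !updE va vc'.
  case: eqVneq => [//|za]; case: eqVneq => [-> _|zc /f2v zv].
    by exists v; rewrite sym evc !updE va vc' fv.
  by exists c; rewrite zv evc !updE ca eqxx.
-
  case: (qtrdf_elim0 Hf fb) => u [ebu /f2v uv]; rewrite uv in ebu.
  have ba : (b == a) = false by apply/negbTE/eqP => E; rewrite E fa in fb.
  have bc : (b == c) = false by apply/negbTE/eqP => E; rewrite E fc in fb.
  have bv : (b == v) = false by apply/negbTE/eqP => E; rewrite E fv in fb.
  have vb : (v == b) = false by rewrite eq_sym.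
  have cb : (c == b) = false by rewrite eq_sym.
  have ac' : (a == c) = false by apply/negbTE.
  pose g := upd (upd (upd f b l2) a l0) c l0.
  apply: (@leq_trans #|Sf g|).
    apply: (key sg nt conn); apply: qtrdf_intro => z; rewrite !updE.
      case: (eqVneq z c) => [-> _|zc].
        by exists v; rewrite sym evc !updE vc' va vb fv.
      case: (eqVneq z a) => [-> _|za]; first by exists b; rewrite eab !updE bc ba eqxx.
      case: (eqVneq z b) => [//|zb fz].
      case: (qtrdf_elim0 Hf fz) => u' [ezu /f2v uv']; exists v; rewrite -uv' ezu uv'.
      by rewrite !updE vc' va vb fv.
    case: (eqVneq z c) => [//|zc]; case: (eqVneq z a) => [//|za].
    case: (eqVneq z b) => [-> _|zb /f2v zv].
      by exists v; rewrite ebu !updE vc' va vb fv.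
    by exists b; rewrite zv sym ebu !updE bc ba eqxx.
  have sub : Sf g \subset b |: ((Sf f :\ a) :\ c).
    apply/subsetP => z; rewrite !inE !updE.
    case: (eqVneq z c) => [//|zc]; case: (eqVneq z a) => [//|za].
    by case: (eqVneq z b) => [->|zb]; rewrite ?eqxx //= => ->; rewrite orbT.
  apply: leq_trans (subset_leq_card sub) _.
  rewrite cardsU1 (cardsD1 a (Sf f)) (cardsD1 c (Sf f :\ a)) !inE fa fc ca /=.
  by rewrite add0n leq_add2r leq_b1.
Qed.

Lemma V2_0 (T : finType) (e : rel T) f :
  is_QTRDF e f -> #|V2f f| = 0 -> #|Sf f| = #|T|.
Proof.
move=> Hf /eqP; rewrite cards_eq0 => /eqP V0.
have -> : Sf f = [set: T]; last by rewrite cardsT.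
apply/setP => z; rewrite !inE; apply/negP => /eqP fz.
case: (qtrdf_elim0 Hf fz) => u [_ fu].
have : u \in V2f f by rewrite inE fu.
by rewrite V0 inE.
Qed.

Lemma eq_gt_P2 (T : finType) (e : rel T) :
  simple_graph e -> nontrivial T -> connected_graph e ->
  gamma_qtR e = gamma_t e -> #|T| = 2.
Proof.
move=> sg nt conn Heq; case: (qtR_att (e:=e) nt conn) => f [Hf Hw].
have k := key sg nt conn Hf.
move: Hw; rewrite weight_split => Hw.
have V0 : #|V2f f| = 0 by lia.
have ST := V2_0 Hf V0.
case: (leqP 3 #|T|) => n3.
  have := n3_lem sg conn n3; move: nt; rewrite /nontrivial; lia.
by move: nt; rewrite /nontrivial; lia.
Qed.

Lemma card2_iso (T : finType) (e : rel T) :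
  simple_graph e -> nontrivial T -> connected_graph e ->
  #|T| = 2 -> graph_iso e (path_rel 2).
Proof.
move=> [sym irr] nt conn T2.
move: (nt); rewrite /nontrivial => /card_gt1P [x _].
case: (nb_ex x nt conn) => y exy.
have xy : x != y by apply/eqP => E; rewrite E irr in exy.
have all2 : forall z, (z == x) || (z == y).
  move=> z; apply/negPn/negP; rewrite negb_or => /andP [zx zy].
  have := max_card (mem (z |: [set x; y])).
  by rewrite cardsU1 cards2 xy !inE negb_or zx zy T2.
pose f := fun z : T => if z == x then (ord0 : 'I_2) else ord_max.
pose g := fun i : 'I_2 => if i == ord0 then x else y.
have yx : (y == x) = false by rewrite eq_sym; apply/negbTE.
exists f; split.
  exists g.
    by move=> z; rewrite /f /g; case: (eqVneq z x) => [->//|zx]; move: (all2 z); rewrite (negbTE zx) /= => /eqP.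
  by move=> i; rewrite /f /g; case: i => [[|[|]]] //= ?; rewrite ?eqxx ?yx //; apply/val_inj.
move=> a b; case/orP: (all2 a) => /eqP ->; case/orP: (all2 b) => /eqP ->;
  by rewrite /f ?eqxx ?yx ?irr ?exy // sym exy.
Qed.
Unset Implicit Arguments.

Theorem mainTheorem2 (T : finType) (e : rel T) :
  simple_graph e -> nontrivial T -> connected_graph e ->
  [/\ gamma_t e <= gamma_qtR e <= 2 * gamma_t e,
      gamma_qtR e = gamma_t e <-> graph_iso e (path_rel 2),
      gamma_qtR e = (gamma_t e).+1 <-> gamma_qtR e = 3
    & gamma_qtR e = 2 * gamma_t e <->
        (gamma_qtR e = gamma_tR e /\ gamma_tR e = 2 * gamma_t e)].
Proof.
move=> sg nt conn.
have h1 := gt_le_qtR sg nt conn.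
have h2 := qtR_le_tR (e:=e) nt conn.
have h3 := tR_le_2gt (e:=e) nt conn.
have h4 := gt_ge2 sg nt conn.
have h5 := qtR_le_card e.
have ntT := nt; rewrite /nontrivial in ntT.
split.
- by rewrite h1 /=; apply: leq_trans h2 h3.
- split; first by move=> H; apply: card2_iso => //; exact: eq_gt_P2 H.
  case=> phi [bij _]; have T2 : #|T| = 2 by rewrite (bij_eq_card bij) card_ord.
  lia.
- split; last first.
    move=> H3; case: (eqVneq (gamma_t e) 3) => [g3|g3]; last by lia.
    have := eq_gt_P2 sg nt conn; lia.
  move=> Heq.
  case: (qtR_att (e:=e) nt conn) => f [Hf Hw].
  have k := key sg nt conn Hf.
  move: Hw; rewrite weight_split => Hw.
  case: (leqP (gamma_t e) 2) => g2; first by lia.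
  case: (eqVneq #|V2f f| 0) => [v0|v0].
    have ST := V2_0 Hf v0.
    have := n4_lem sg conn; lia.
  have v1 : #|V2f f| = 1 by lia.
  have := n2_one sg nt conn Hf v1; lia.
- split; last by case=> ->.
  by move=> H; lia.
Qed.
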